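(* Let $G=\langle g,h\rangle$ be a non-cyclic torsion-free group. Let $G_1=\langle g_1,h_1\rangle$ and $G_2=\langle g_2,h_2\rangle$ be two copies of $G$ (with $g_i,h_i$ corresponding to $g,h$), and let $H=G_1*_{\langle g_1\rangle=\langle g_2\rangle}G_2$ be the free product with amalgamation in which $g_1$ is identified with $g_2$; write $g$ for this common element of $H$. Let $K=\langle h_2^{-1}h_1,g\rangle\le H$. Then for every nonzero $n\in\mathbb{Z}$, \[(h_2^{-1}h_1)^n\notin\langle\langle g\rangle\rangle_K.\]
   Context: $\langle\langle g\rangle\rangle_K$ denotes the normal closure of $g$ in $K$. *)

(* Defs.v *)
From Stdlib Require Import ZArith.

Record group := Group {
  carrier :> Type;
  gmul : carrier -> carrier -> carrier;
  ginv : carrier -> carrier;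
  gone : carrier;
  gmulA : forall x y z, gmul x (gmul y z) = gmul (gmul x y) z;
  gmul1l : forall x, gmul gone x = x;
  gmul1r : forall x, gmul x gone = x;
  gmulVl : forall x, gmul (ginv x) x = gone;
  gmulVr : forall x, gmul x (ginv x) = gone
}.

Arguments gmul {g}.
Arguments ginv {g}.
Arguments gone {g}.

Fixpoint gpow {G : group} (x : G) (n : nat) : G :=
  match n with O => gone | S m => gmul x (gpow x m) end.

Definition gzpow {G : group} (x : G) (n : Z) : G :=
  match n with
  | Z0 => gone
  | Zpos p => gpow x (Pos.to_nat p)
  | Zneg p => ginv (gpow x (Pos.to_nat p))
  end.

Inductive gen {G : group} (S : G -> Prop) : G -> Prop :=
| gen_in : forall x, S x -> gen S x
| gen_one : gen S gone
| gen_mul : forall x y, gen S x -> gen S y -> gen S (gmul x y)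
| gen_inv : forall x, gen S x -> gen S (ginv x).

Definition generated_by2 {G : group} (g h : G) : Prop :=
  forall x : G, gen (fun y => y = g \/ y = h) x.

Definition cyclic_group (G : group) : Prop :=
  exists c : G, forall x : G, gen (fun y => y = c) x.

Definition torsion_free (G : group) : Prop :=
  forall (x : G) (n : nat), (0 < n)%nat -> gpow x n = gone -> x = gone.

Definition is_hom {G L : group} (f : G -> L) : Prop :=
  forall x y : G, f (gmul x y) = gmul (f x) (f y).

(* (H, i1, i2) is the free product with amalgamation G_1 *_{<g_1> = <g_2>} G_2
   of two copies of G, in which g_1 is identified with g_2, characterized by its
   universal property (pushout of G <- <g> -> G in the category of groups). *)
Definition is_amalgam (G : group) (g : G) (H : group) (i1 i2 : G -> H) : Prop :=
  is_hom i1 /\ is_hom i2 /\ i1 g = i2 g /\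
  forall (L : group) (f1 f2 : G -> L),
    is_hom f1 -> is_hom f2 -> f1 g = f2 g ->
    (exists phi : H -> L, is_hom phi /\
        (forall x, phi (i1 x) = f1 x) /\ (forall x, phi (i2 x) = f2 x)) /\
    (forall phi psi : H -> L, is_hom phi -> is_hom psi ->
        (forall x, phi (i1 x) = f1 x) -> (forall x, phi (i2 x) = f2 x) ->
        (forall x, psi (i1 x) = f1 x) -> (forall x, psi (i2 x) = f2 x) ->
        forall y, phi y = psi y).

Definition normal_closure_in {G : group} (K : G -> Prop) (a : G) : G -> Prop :=
  gen (fun y => exists k, K k /\ y = gmul (ginv k) (gmul a k)).

(* Main.v *)
Require Import Defs.
From Stdlib Require Import ZArith Lia.
From Stdlib Require Import ClassicalEpsilon FunctionalExtensionality.

Section GL.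
Variable G : group.

Lemma inv_uniq (a b : G) : gmul a b = gone -> a = ginv b.
Proof.
  intro E. rewrite <- (gmul1r _ a). rewrite <- (gmulVr _ b).
  rewrite gmulA, E. apply gmul1l.
Qed.

Lemma inv_inv (y : G) : ginv (ginv y) = y.
Proof. symmetry. apply inv_uniq. apply gmulVr. Qed.

Lemma inv_one : ginv (@gone G) = gone.
Proof. symmetry. apply inv_uniq. apply gmul1l. Qed.

Lemma inv_mul (a b : G) : ginv (gmul a b) = gmul (ginv b) (ginv a).
Proof.
  symmetry. apply inv_uniq.
  rewrite <- gmulA, (gmulA _ (ginv a)), gmulVl, gmul1l, gmulVl. reflexivity.
Qed.

Lemma gen_sub_mul (S : G -> Prop) : forall x y,
  gen S x -> gen S y -> gen S (gmul x y).
Proof. intros; apply gen_mul; auto. Qed.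
End GL.

Lemma hom_one (A B : group) (f : A -> B) : is_hom f -> f gone = gone.
Proof.
  intro Hf. assert (E : f gone = gmul (f gone) (f gone)).
  { rewrite <- Hf, gmul1l. reflexivity. }
  assert (E2 : gmul (ginv (f gone)) (f gone) = gmul (ginv (f gone)) (gmul (f gone) (f gone))) by (rewrite <- E; reflexivity).
  rewrite gmulA, gmulVl, gmul1l in E2. symmetry. exact E2.
Qed.

Lemma hom_inv (A B : group) (f : A -> B) (y : A) : is_hom f -> f (ginv y) = ginv (f y).
Proof.
  intro Hf. apply inv_uniq. rewrite <- Hf, gmulVl. apply hom_one; auto.
Qed.

Definition ind (P : Prop) : Z := if excluded_middle_informative P then 1%Z else 0%Z.

Lemma ind_ext (P Q : Prop) : (P <-> Q) -> ind P = ind Q.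
Proof.
  intro E. unfold ind. destruct (excluded_middle_informative P), (excluded_middle_informative Q); tauto.
Qed.

Lemma ind_true (P : Prop) : P -> ind P = 1%Z.
Proof. intro. unfold ind. destruct (excluded_middle_informative P); tauto. Qed.
Lemma ind_false (P : Prop) : ~ P -> ind P = 0%Z.
Proof. intro. unfold ind. destruct (excluded_middle_informative P); tauto. Qed.

Section L.
Variable G : group.
Definition LT := ((G -> Z) * G)%type.
Definition Lmul (p q : LT) : LT :=
  (fun w => (fst p w + fst q (gmul (ginv (snd p)) w))%Z, gmul (snd p) (snd q)).
Definition Linv (p : LT) : LT :=
  (fun w => (- fst p (gmul (snd p) w))%Z, ginv (snd p)).
Definition Lone : LT := (fun _ => 0%Z, gone).

Lemma LmulA : forall x y z, Lmul x (Lmul y z) = Lmul (Lmul x y) z.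
Proof.
  intros [a y] [b z] [c u]. unfold Lmul; simpl. f_equal.
  - apply functional_extensionality; intro w. rewrite inv_mul, gmulA. lia.
  - apply gmulA.
Qed.
Lemma Lmul1l : forall x, Lmul Lone x = x.
Proof.
  intros [a y]. unfold Lmul, Lone; simpl. f_equal.
  - apply functional_extensionality; intro w. rewrite inv_one, gmul1l. lia.
  - apply gmul1l.
Qed.
Lemma Lmul1r : forall x, Lmul x Lone = x.
Proof.
  intros [a y]. unfold Lmul, Lone; simpl. f_equal.
  - apply functional_extensionality; intro w. lia.
  - apply gmul1r.
Qed.
Lemma LmulVl : forall x, Lmul (Linv x) x = Lone.
Proof.
  intros [a y]. unfold Lmul, Linv, Lone; simpl. f_equal.
  - apply functional_extensionality; intro w. rewrite inv_inv. lia.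
  - apply gmulVl.
Qed.
Lemma LmulVr : forall x, Lmul x (Linv x) = Lone.
Proof.
  intros [a y]. unfold Lmul, Linv, Lone; simpl. f_equal.
  - apply functional_extensionality; intro w. rewrite gmulA, gmulVr, gmul1l. lia.
  - apply gmulVr.
Qed.

Definition Lgrp : group := Group LT Lmul Linv Lone LmulA Lmul1l Lmul1r LmulVl LmulVr.
End L.

Theorem lemma3p3 (G : group) (g h : G)
  (HGgen : generated_by2 g h) (Hnc : ~ cyclic_group G) (Htf : torsion_free G)
  (H : group) (i1 i2 : G -> H) (Ham : is_amalgam G g H i1 i2) :
  let x := gmul (ginv (i2 h)) (i1 h) in
  let K := gen (fun y => y = x \/ y = i1 g) in
  forall n : Z, n <> 0%Z -> ~ normal_closure_in K (i1 g) (gzpow x n).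
Proof.
  intros x K n Hn HN.
  destruct Ham as [Hh1 [Hh2 [Hg U]]].
  set (C := gen (fun y : G => y = g)).
  assert (Cg : C g) by (apply gen_in; reflexivity).
  assert (hC : ~ C h).
  { intro Ch. apply Hnc. exists g.
    assert (A : forall y, gen (fun y0 => y0 = g \/ y0 = h) y -> C y).
    { intros y Hy. induction Hy as [z Hz | | | ].
      - destruct Hz as [E | E]; rewrite E; assumption.
      - apply gen_one.
      - apply gen_mul; auto.
      - apply gen_inv; auto. }
    intro y. apply A, HGgen. }
  set (d := fun (y : G) (w : G) => (ind (C (gmul (ginv y) w)) - ind (C w))%Z).
  set (f1 := fun y : G => ((fun _ : G => 0%Z), y) : Lgrp G).
  set (f2 := fun y : G => (d y, y) : Lgrp G).
  assert (Hf1 : is_hom f1).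
  { intros a b. unfold f1; simpl. unfold Lmul; simpl. f_equal. }
  assert (Hf2 : is_hom f2).
  { intros a b. unfold f2; simpl. unfold Lmul; simpl. f_equal.
    apply functional_extensionality; intro w. unfold d.
    rewrite inv_mul, <- gmulA. lia. }
  assert (Hfg : f1 g = f2 g).
  { unfold f1, f2. f_equal. apply functional_extensionality; intro w. unfold d.
    rewrite (ind_ext (C (gmul (ginv g) w)) (C w)). lia.
    split; intro Hc.
    - replace w with (gmul g (gmul (ginv g) w)).
      + apply gen_mul; auto.
      + rewrite gmulA, gmulVr, gmul1l. reflexivity.
    - apply gen_mul; auto. apply gen_inv; auto. }
  destruct (U (Lgrp G) f1 f2 Hf1 Hf2 Hfg) as [[phi [Hphi [P1 P2]]] _].
  set (good := fun p : Lgrp G => C (snd p) /\ forall c, C c -> fst p c = fst p gone).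
  set (val := fun p : Lgrp G => fst p gone).
  assert (Cinv : forall c, C c -> C (ginv c)) by (intros; apply gen_inv; auto).
  assert (Cmul : forall a b, C a -> C b -> C (gmul a b)) by (intros; apply gen_mul; auto).
  assert (gmul_good : forall p q, good p -> good q -> good (gmul p q) /\ val (gmul p q) = (val p + val q)%Z).
  { intros [a y] [b z] [Cy Ha] [Cz Hb]; simpl in *. unfold good, val; simpl; unfold Lmul; simpl.
    rewrite gmul1r. repeat split; auto.
    - intros c Cc. rewrite (Ha c Cc), (Hb _ (Cmul _ _ (Cinv _ Cy) Cc)), (Hb _ (Cinv _ Cy)). reflexivity.
    - rewrite (Hb _ (Cinv _ Cy)). reflexivity. }
  assert (ginv_good : forall p, good p -> good (ginv p) /\ val (ginv p) = (- val p)%Z).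
  { intros [a y] [Cy Ha]; simpl in *. unfold good, val; simpl; unfold Linv; simpl.
    rewrite gmul1r. repeat split; auto.
    - intros c Cc. rewrite (Ha _ (Cmul _ _ Cy Cc)), (Ha _ Cy). reflexivity.
    - rewrite (Ha _ Cy). reflexivity. }
  assert (one_good : good gone /\ val gone = 0%Z).
  { unfold good, val; simpl; unfold Lone; simpl. repeat split; auto. apply gen_one. }
  assert (phix : good (phi x) /\ val (phi x) = (-1)%Z).
  { unfold x. rewrite Hphi, hom_inv, P1, P2 by exact Hphi.
    unfold f1, f2. simpl. unfold Linv, Lmul, good, val; simpl.
    rewrite !gmul1r.
    assert (E : forall c, C c -> (- d h (gmul h c) + 0)%Z = (-1)%Z).
    { intros c Cc. unfold d. rewrite gmulA, gmulVl, gmul1l.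
      rewrite ind_true by exact Cc. rewrite ind_false. lia.
      intro Hc. apply hC. replace h with (gmul (gmul h c) (ginv c)).
      - apply Cmul; auto.
      - rewrite <- gmulA, gmulVr, gmul1r. reflexivity. }
    repeat split.
    - rewrite gmulVl. apply gen_one.
    - intros c Cc. rewrite (E c Cc). pose proof (E gone (gen_one _)) as E0. rewrite gmul1r in E0. rewrite E0. reflexivity.
    - pose proof (E gone (gen_one _)) as E0. rewrite gmul1r in E0. exact E0. }
  assert (phig : good (phi (i1 g)) /\ val (phi (i1 g)) = 0%Z).
  { rewrite P1. unfold f1, good, val; simpl. repeat split; auto. }
  assert (Kgood : forall k, K k -> good (phi k)).
  { intros k Hk. induction Hk as [z [-> | ->] | | | ].
    - apply phix.
    - apply phig.
    - rewrite hom_one by exact Hphi. apply one_good.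
    - rewrite Hphi. apply gmul_good; auto.
    - rewrite hom_inv by exact Hphi. apply ginv_good; auto. }
  assert (Ngood : forall y, normal_closure_in K (i1 g) y -> good (phi y) /\ val (phi y) = 0%Z).
  { intros y Hy. induction Hy as [z [k [Hk ->]] | | | ].
    - pose proof (Kgood k Hk) as Gk.
      rewrite !Hphi, hom_inv by exact Hphi.
      destruct (ginv_good _ Gk) as [G1 V1].
      destruct (gmul_good _ _ (proj1 phig) Gk) as [G2 V2].
      destruct (gmul_good _ _ G1 G2) as [G3 V3].
      split; auto. rewrite V3, V2, V1, (proj2 phig). lia.
    - rewrite hom_one by exact Hphi. apply one_good.
    - rewrite Hphi. destruct IHHy1, IHHy2.
      destruct (gmul_good _ _ H0 H2). split; auto. lia.
    - rewrite hom_inv by exact Hphi. destruct IHHy.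
      destruct (ginv_good _ H0). split; auto. lia. }
  assert (Pow : forall m, good (phi (gpow x m)) /\ val (phi (gpow x m)) = (- Z.of_nat m)%Z).
  { induction m; simpl.
    - rewrite hom_one by exact Hphi. apply one_good.
    - rewrite Hphi. destruct IHm. destruct (gmul_good _ _ (proj1 phix) H0).
      split; auto. rewrite H3, H1, (proj2 phix). lia. }
  destruct (Ngood _ HN) as [_ V].
  destruct n as [|p|p]; [congruence| |].
  - simpl in V. rewrite (proj2 (Pow _)) in V. lia.
  - simpl in V. rewrite hom_inv in V by exact Hphi.
    destruct (ginv_good _ (proj1 (Pow (Pos.to_nat p)))) as [_ V2].
    rewrite V2, (proj2 (Pow _)) in V. lia.
Qed.
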